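(* Let $\lambda\in(0,1)$ and let $n$ be a positive integer. If $G$ is a graph that maximizes $Mc^{e}_{\lambda}(G)$ among all finite simple connected graphs with $n$ vertices, then $G$ is a tree.
   Context: $d(u,v)$ denotes graph distance and $[u]$ the set of neighbours of $u$. For vertices $k,l$, $s^{kl}$ is the number of shortest $k$–$l$ paths and, for an edge $uv$, $s^{kl}_{uv}$ is the number of those passing through the edge $uv$. The exponential edge betweenness of an edge $uv$ is $b^{e}_{\lambda}(uv)=\sum_{\{k,l\}}\frac{s^{kl}_{uv}}{s^{kl}}\lambda^{d(k,l)}$ over all unordered pairs $\{k,l\}$ of distinct vertices; the exponential betweenness centrality of a vertex $u$ is $c^{e}_{\lambda}(u)=\sum_{v\in[u]}b^{e}_{\lambda}(uv)$; and $Mc^{e}_{\lambda}(G)=\max\{c^{e}_{\lambda}(u):u\in V(G)\}$. *)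

(* Defs.v *)
From HB Require Import structures.
From mathcomp Require Import all_boot all_order all_algebra.
From mathcomp Require Import reals.
Set Implicit Arguments. Unset Strict Implicit. Unset Printing Implicit Defensive.
Import Order.TTheory GRing.Theory Num.Theory.
Local Open Scope ring_scope.

Section Graphs.
Variable T : finType.
Implicit Types (e : rel T) (k l u v : T).

Definition simple_graph e : Prop := symmetric e /\ irreflexive e.

Definition connected_graph e : Prop := forall k l, connect e k l.

Definition is_tree e : Prop :=
  connected_graph e /\ ~ (exists c : seq T, (2 < size c)%N && ucycleb e c).

(* walks of length m from k to l: the m vertices after k, as an m-tuple *)
Definition walks e m k l : {set m.-tuple T} :=
  [set t : m.-tuple T | path e k t && (last k t == l)].

(* graph distance: least m with a walk of length m (for connected graphs
   this is < #|T|) *)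
Definition dist e k l : nat :=
  find (fun m => 0 < #|walks e m k l|)%N (iota 0 #|T|).

Definition sp e k l : {set (dist e k l).-tuple T} := walks e (dist e k l) k l.

Definition s_num e k l : nat := #|sp e k l|.

Definition uses_edge k (t : seq T) u v : bool :=
  has (fun p => (p == (u, v)) || (p == (v, u))) (zip (k :: t) t).

Definition s_edge e k l u v : nat :=
  #|[set t in sp e k l | uses_edge k t u v]|.

Variable R : realType.

(* exponential edge betweenness: sum over unordered pairs {k,l}, k <> l,
   each pair taken once via the enumeration order of T *)
Definition edge_betw (lam : R) e u v : R :=
  \sum_(k : T) \sum_(l : T | (enum_rank k < enum_rank l)%N)
     (s_edge e k l u v)%:R / (s_num e k l)%:R * lam ^+ dist e k l.

Definition exp_centr (lam : R) e u : R := \sum_(v : T | e u v) edge_betw lam e u v.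

(* Mc: maximum over vertices (all values are >= 0, so 0 is a neutral seed) *)
Definition Mc (lam : R) e : R := \big[Num.max/0]_(u : T) exp_centr lam e u.

End Graphs.

(* Main.v *)
Require Import Defs.
From HB Require Import structures.
From mathcomp Require Import all_boot all_order all_algebra.
From mathcomp Require Import reals.
Import Order.TTheory GRing.Theory Num.Theory.
Set Implicit Arguments. Unset Strict Implicit. Unset Printing Implicit Defensive.
Section Aux.
Variable T : finType.
Variable e : rel T.
Lemma dist_le k l (p : seq T) : path e k p -> last k p = l -> size p < #|T| ->
  dist e k l <= size p.
Proof.
move=> pp lp sz; rewrite /dist leqNgt; apply/negP => /(before_find 0).
rewrite nth_iota; last exact: sz.
rewrite add0n => /negP; apply; apply/card_gt0P.
have tp : size p == size p by apply: eqxx.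
exists (Tuple tp); rewrite inE /=. by rewrite pp lp eqxx.
Qed.

Lemma dist_ge k l m : (forall i, i < m -> #|walks e i k l| = 0) -> m <= #|T| ->
  m <= dist e k l.
Proof.
move=> H hm; rewrite /dist leqNgt; apply/negP => lt.
have hs : find (fun m => 0 < #|walks e m k l|) (iota 0 #|T|) < size (iota 0 #|T|).
  rewrite size_iota. exact: (leq_trans lt hm).
have := nth_find 0 (etrans (has_find _ _) hs).
rewrite nth_iota; last exact: (leq_trans lt hm).
by rewrite add0n H.
Qed.

Lemma dist_leT k l : dist e k l <= #|T|.
Proof. by rewrite /dist -{2}(size_iota 0 #|T|) find_size. Qed.

Lemma sp_uniq k l (t : (dist e k l).-tuple T) : t \in sp e k l -> uniq (k :: t).
Proof.
rewrite inE => /andP[pt /eqP] lt0; apply/negPn/negP => nu; move: lt0.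
case: (shortenP pt) => p' pp' up' sub lt.
have hlt : size (k :: p') < size (k :: t).
  rewrite ltnNge; apply/negP => h; move/negP: nu; apply.
  apply: leq_size_uniq up' _ h => z; rewrite !inE => /orP[->//|/sub->]; by rewrite orbT.
rewrite /= size_tuple ltnS in hlt.
have hT := dist_leT k l.
have := dist_le pp' lt (leq_trans hlt hT).
by rewrite leqNgt hlt.
Qed.

Lemma s_num_gt0 k l : dist e k l < #|T| -> 0 < s_num e k l.
Proof.
move=> h; rewrite /s_num /sp.
have hs : find (fun m => 0 < #|walks e m k l|) (iota 0 #|T|) < size (iota 0 #|T|).
  by rewrite size_iota.
have := nth_find 0 (etrans (has_find _ _) hs).
rewrite nth_iota; last exact: h.
by rewrite add0n.
Qed.

Lemma zip_belast (k : T) t : zip (k :: t) t = zip (belast k t) t.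
Proof. by elim: t k => [|a t IH] k //=; rewrite IH. Qed.

Lemma mem_zip1 (b t : seq T) u w : (u, w) \in zip b t -> u \in b /\ w \in t.
Proof.
elim: b t => [|x b IH] [|y t] //=; rewrite in_cons => /orP[/eqP[-> ->]|/IH[h1 h2]];
  by rewrite !in_cons ?eqxx ?h1 ?h2 ?orbT.
Qed.

Lemma zip_fst (b t : seq T) u w : uniq b -> (u, w) \in zip b t ->
  w = nth u t (index u b).
Proof.
elim: b t => [|x b IH] [|y t] //= /andP[xb ub]; rewrite in_cons => /orP[/eqP[-> ->]|h].
  by rewrite eqxx.
have [ub' _] := mem_zip1 h.
have -> : (x == u) = false by apply/eqP => E; subst; rewrite ub' in xb.
by rewrite /= (IH _ ub h).
Qed.

Lemma zip_snd (b t : seq T) u w : uniq t -> (w, u) \in zip b t ->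
  w = nth u b (index u t).
Proof.
elim: t b => [|y t IH] [|x b] //= /andP[yt ut]; rewrite in_cons => /orP[/eqP[-> ->]|h].
  by rewrite eqxx.
have [_ ut'] := mem_zip1 h.
have -> : (y == u) = false by apply/eqP => E; subst; rewrite ut' in yt.
by rewrite /= (IH _ ut h).
Qed.

Lemma uses_card k (t : seq T) u : uniq (k :: t) -> k != last k t ->
  #|[pred w | uses_edge k t u w]| <= (if (u == k) || (u == last k t) then 1 else 2).
Proof.
move=> un kl.
have /andP[ub lb] : uniq (belast k t) && (last k t \notin belast k t).
  by move: un; rewrite lastI rcons_uniq andbC.
have /andP[kt ut] : (k \notin t) && uniq t by [].
set w1 := nth u t (index u (belast k t)).
set w2 := nth u (belast k t) (index u t).
have H w : uses_edge k t u w ->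
    ((u, w) \in zip (belast k t) t) || ((w, u) \in zip (belast k t) t).
  rewrite /uses_edge zip_belast => /hasP[p pin /orP[/eqP E|/eqP E]];
    by subst p; rewrite pin ?orbT.
case: ifP => [/orP[/eqP uk|/eqP ul]|_].
- apply: leq_trans (subset_leq_card (_ : _ \subset pred1 w1)) _; last by rewrite card1.
  apply/subsetP => w; rewrite inE => /H /orP[h|h]; first by rewrite inE (zip_fst ub h).
  by have [_ ut'] := mem_zip1 h; move: kt; rewrite -uk ut'.
- apply: leq_trans (subset_leq_card (_ : _ \subset pred1 w2)) _; last by rewrite card1.
  apply/subsetP => w; rewrite inE => /H /orP[h|h]; last by rewrite inE (zip_snd ut h).
  by have [ub' _] := mem_zip1 h; move: lb; rewrite -ul ub'.
- apply: leq_trans (subset_leq_card (_ : _ \subset pred2 w1 w2)) _; last by rewrite card2; case: (w1 != w2).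
  apply/subsetP => w; rewrite inE => /H /orP[h|h]; rewrite inE.
    by rewrite (zip_fst ub h) eqxx.
  by rewrite (zip_snd ut h) eqxx orbT.
Qed.

Lemma cardE' (X : finType) (A : pred X) : #|A| = \sum_x (x \in A : nat).
Proof. by rewrite -sum1_card big_mkcond; apply: eq_bigr => x _; case: (x \in A). Qed.

Lemma sum_sedge (P : pred T) k l u :
  \sum_(v | P v) s_edge e k l u v =
  \sum_(t in sp e k l) #|[pred v | P v && uses_edge k t u v]|.
Proof.
rewrite /s_edge big_mkcond /= [RHS]big_mkcond /=.
under eq_bigr => v _ do rewrite cardE'.
under [RHS]eq_bigr => t _ do rewrite cardE'.
transitivity (\sum_v \sum_t ((P v && (t \in sp e k l) && uses_edge k t u v) : nat)).
  apply: eq_bigr => v _; case: (P v) => /=.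
    by apply: eq_bigr => t _; rewrite inE.
  by rewrite big1.
rewrite exchange_big /=; apply: eq_bigr => t _; case: (t \in sp e k l) => /=.
  by apply: eq_bigr => v _; rewrite inE andbT.
by rewrite big1 // => v _; rewrite andbF.
Qed.

Lemma sum_sedge_le (P : pred T) k l u : k != l ->
  \sum_(v | P v) s_edge e k l u v <= (if (u == k) || (u == l) then 1 else 2) * s_num e k l.
Proof.
move=> kl; rewrite sum_sedge /s_num -sum1_card big_distrr /=.
apply: leq_sum => t tin; rewrite muln1.
have un := sp_uniq tin.
have lt : last k t = l by move: tin; rewrite inE => /andP[_ /eqP].
apply: leq_trans (subset_leq_card (_ : _ \subset [pred w | uses_edge k t u w])) _.
  by apply/subsetP => w; rewrite !inE => /andP[].
by have := @uses_card k t u un; rewrite lt; apply.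
Qed.

Lemma sum_sedge_ge (P : pred T) k l u c :
  (forall t, t \in sp e k l -> c <= #|[pred v | P v && uses_edge k t u v]|) ->
  c * s_num e k l <= \sum_(v | P v) s_edge e k l u v.
Proof.
move=> H; rewrite sum_sedge /s_num -sum1_card big_distrr /=.
by apply: leq_sum => t tin; rewrite muln1 H.
Qed.

Lemma walks0 k l : k != l -> #|walks e 0 k l| = 0.
Proof.
move=> kl; apply/eqP; rewrite cards_eq0; apply/eqP/setP => t.
by rewrite !inE tuple0 /= (negbTE kl).
Qed.

Lemma walks1 k l : ~~ e k l -> #|walks e 1 k l| = 0.
Proof.
move=> kl; apply/eqP; rewrite cards_eq0; apply/eqP/setP => t.
rewrite !inE; case/tupleP: t => a t'; rewrite tuple0 /= andbT.
by apply/negP => /andP[ka /eqP al]; subst a; rewrite ka in kl.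
Qed.

Lemma dist_ge1 k l : k != l -> 1 <= dist e k l.
Proof.
move=> kl; apply: dist_ge; last by apply/card_gt0P; exists k.
by case=> // _; apply: walks0.
Qed.

Lemma dist_ge2 k l : k != l -> ~~ e k l -> 2 <= #|T| -> 2 <= dist e k l.
Proof.
move=> kl nkl h2; apply: dist_ge h2.
by case=> [|[]] // _; [apply: walks0 | apply: walks1].
Qed.

Lemma card2T (k l : T) : k != l -> 2 <= #|T|.
Proof. by move=> kl; apply/card_gt1P; exists k, l. Qed.

Lemma card3T (k l u : T) : uniq [:: k; l; u] -> 3 <= #|T|.
Proof. by move=> /card_uniqP h; rewrite -[3]/(size [:: k; l; u]) -h max_card. Qed.

Lemma uses_short k l u w (s : seq T) : size s <= 1 -> last k s = l ->
  u != k -> u != l -> uses_edge k s u w = false.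
Proof.
case: s => [|a [|b s]] //= _ <- uk ua.
rewrite /uses_edge /= !xpair_eqE orbF.
by rewrite eq_sym (negbTE uk) /= [a == u]eq_sym (negbTE ua) andbF.
Qed.

Lemma sedge_short k l u w : dist e k l <= 1 -> u != k -> u != l ->
  s_edge e k l u w = 0.
Proof.
move=> d1 uk ul; apply/eqP; rewrite cards_eq0; apply/eqP/setP => t.
rewrite !inE; apply/negP => /andP[/andP[_ /eqP lt]].
by rewrite (uses_short (l:=l)) // size_tuple.
Qed.
End Aux.

Section Real.
Variable T : finType.
Variable R : realType.
Variable lam : R.
Local Open Scope ring_scope.
Hypothesis hlam : 0 < lam < 1.

Definition inner (e : rel T) u k l : R :=
  \sum_(v | e u v) (s_edge e k l u v)%:R / (s_num e k l)%:R * lam ^+ dist e k l.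

Definition Bf (u k l : T) : R := if (u == k) || (u == l) then lam else 2%:R * lam ^+ 2.

Lemma inner_eq e u k l : inner e u k l =
  ((\sum_(v | e u v) s_edge e k l u v)%N%:R / (s_num e k l)%:R) * lam ^+ dist e k l.
Proof. by rewrite /inner natr_sum -!mulr_suml. Qed.

Lemma ratio_le (N s c : nat) : (N <= c * s)%N -> N%:R / s%:R <= c%:R :> R.
Proof.
case: s => [|s]; first by rewrite muln0 leqn0 => /eqP ->; rewrite mul0r ler0n.
by move=> h; rewrite ler_pdivrMr ?ltr0Sn // -natrM ler_nat.
Qed.

Lemma ratio_ge (N s c : nat) : (0 < s)%N -> (c * s <= N)%N -> c%:R <= N%:R / s%:R :> R.
Proof. by move=> s0 h; rewrite ler_pdivlMr ?ltr0n // -natrM ler_nat. Qed.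

Lemma lam_ge0 : 0 <= lam.
Proof. by case/andP: hlam => /ltW. Qed.

Lemma pow_le m d : (m <= d)%N -> lam ^+ d <= lam ^+ m.
Proof.
move=> md; rewrite -(subnKC md) exprD.
rewrite -{2}[lam ^+ m]mulr1 ler_wpM2l ?exprn_ge0 ?lam_ge0 //.
by apply: exprn_ile1; [apply: lam_ge0 | case/andP: hlam => _ /ltW].
Qed.

Lemma ratio_ge0 (N s : nat) : 0 <= N%:R / s%:R :> R.
Proof. by rewrite divr_ge0 ?ler0n. Qed.

Lemma inner_le e u k l : k != l -> inner e u k l <= Bf u k l.
Proof.
move=> kl; rewrite inner_eq /Bf.
have hs := sum_sedge_le e (e u) u kl.
case: ifP => hu; rewrite hu in hs.
  apply: le_trans (_ : 1%:R * lam ^+ dist e k l <= _).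
    by rewrite ler_wpM2r ?exprn_ge0 ?lam_ge0 ?ratio_le.
  by rewrite mul1r -{2}[lam]expr1 pow_le // dist_ge1.
case: (leqP (dist e k l) 1) => d1.
  rewrite big1 ?mul0r ?mulr0 ?mulr_ge0 ?ler0n ?exprn_ge0 ?lam_ge0 // => v _.
  by apply: sedge_short => //; apply/negP => /eqP E; subst; rewrite eqxx ?orbT in hu.
apply: le_trans (_ : 2%:R * lam ^+ dist e k l <= _).
  by rewrite ler_wpM2r ?exprn_ge0 ?lam_ge0 ?ratio_le.
by rewrite ler_wpM2l ?ler0n // pow_le.
Qed.

Lemma inner_lt (e : rel T) u x y : x != y -> x != u -> y != u -> e x y -> inner e u x y < Bf u x y.
Proof.
move=> xy xu yu exy; rewrite /inner /Bf ![u == _]eq_sym (negbTE xu) (negbTE yu) /=.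
have d1 : (dist e x y <= 1)%N.
  by apply: (@dist_le _ e x y [:: y]) => //=; [rewrite exy | apply: card2T xy].
have lam0 : 0 < lam by case/andP: hlam.
rewrite big1 ?mulr_gt0 ?ltr0n ?exprn_gt0 //.
by move=> v _; rewrite sedge_short ?mul0r // eq_sym.
Qed.

Definition star (u : T) : rel T := fun x y => (x != y) && ((x == u) || (y == u)).

Lemma inner_star u k l : k != l -> Bf u k l <= inner (star u) u k l.
Proof.
move=> kl; rewrite inner_eq /Bf.
have h2 := card2T kl.
case: ifP => hu.
  have d1 : dist (star u) k l = 1%N.
    apply/eqP; rewrite eqn_leq dist_ge1 // andbT.
    apply: (@dist_le _ _ k l [:: l]) => //=.
    by rewrite andbT /star kl ![_ == u]eq_sym hu.
  rewrite d1 expr1.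
  have sp0 : (0 < s_num (star u) k l)%N by apply: s_num_gt0; rewrite d1.
  rewrite -{1}[lam]mul1r ler_wpM2r ?lam_ge0 //; apply: (@ratio_ge _ _ 1%N sp0).
  apply: sum_sedge_ge => t tin.
  have st : size t = 1%N by rewrite size_tuple d1.
  move: tin; rewrite inE; move: st; case: (tval t) => [|a [|b s]] //= _ /andP[/andP[pa _] /eqP al].
  subst a; apply/card_gt0P; case/orP: hu => /eqP uk; subst u.
    by exists l; rewrite inE /= /star /uses_edge /= !eqxx kl.
  by exists k; rewrite inE /= /star /uses_edge /= !eqxx eq_sym kl /= orbT.
have /norP[uk ul] : ~~ ((u == k) || (u == l)) by rewrite hu.
have h3 : (3 <= #|T|)%N by apply: (card3T (k:=k) (l:=l) (u:=u)); rewrite /= !inE negb_or kl ![_ == u]eq_sym uk ul.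
have d2 : dist (star u) k l = 2%N.
  apply/eqP; rewrite eqn_leq; apply/andP; split.
    apply: (@dist_le _ _ k l [:: u; l]) => //=.
    by rewrite /star !eqxx !orbT /= andbT [k == u]eq_sym uk ul.
  apply: dist_ge2 => //; rewrite /star kl ![_ == u]eq_sym (negbTE uk) (negbTE ul) //.
rewrite d2.
have sp0 : (0 < s_num (star u) k l)%N by apply: s_num_gt0; rewrite d2.
rewrite ler_wpM2r ?exprn_ge0 ?lam_ge0 //; apply: ratio_ge sp0 _.
apply: sum_sedge_ge => t tin.
have st : size t = 2%N by rewrite size_tuple d2.
move: tin; rewrite inE; move: st; case: (tval t) => [|a [|b [|c s]]] //= _ /andP[/andP[ka _] /eqP bl].
subst b.
have au : a = u.
  move: ka; rewrite /star [k == u]eq_sym (negbTE uk) /= => /andP[_ /eqP] //.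
subst a; apply/card_gt1P; exists k, l; split => //; rewrite !inE /star.
  by rewrite uk eqxx /uses_edge /= !eqxx !orbT.
by rewrite ul eqxx /uses_edge /= !eqxx !orbT.
Qed.

Lemma centr_eq (e : rel T) u : exp_centr lam e u =
  \sum_k \sum_(l | (enum_rank k < enum_rank l)%N) inner e u k l.
Proof.
rewrite /exp_centr /edge_betw exchange_big; apply: eq_bigr => k _.
by rewrite exchange_big.
Qed.

Lemma centr_ge0 (e : rel T) u : 0 <= exp_centr lam e u.
Proof.
apply: sumr_ge0 => v _; apply: sumr_ge0 => k _; apply: sumr_ge0 => l _.
by rewrite mulr_ge0 ?ratio_ge0 ?exprn_ge0 ?lam_ge0.
Qed.

Lemma sum_lt2 (Q : T -> T -> bool) (F G : T -> T -> R) p q :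
  (forall k l, Q k l -> F k l <= G k l) -> Q p q -> F p q < G p q ->
  \sum_k \sum_(l | Q k l) F k l < \sum_k \sum_(l | Q k l) G k l.
Proof.
move=> H Qpq lt.
rewrite (bigD1 p) // [X in _ < X](bigD1 p) //=; apply: ltr_leD.
  rewrite (bigD1 q) // [X in _ < X](bigD1 q) //=; apply: ltr_leD => //.
  by apply: ler_sum => l /andP[Q' _]; apply: H.
by apply: ler_sum => k _; apply: ler_sum => l; apply: H.
Qed.

End Real.

Lemma star_simple (T : finType) (w : T) : simple_graph (star w).
Proof.
split; last by move=> x; rewrite /star eqxx.
by move=> x y; rewrite /star eq_sym orbC.
Qed.

Lemma star_conn (T : finType) (w : T) : connected_graph (star w).
Proof.
have hw k : connect (star w) k w /\ connect (star w) w k.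
  case: (eqVneq k w) => [->|kw]; first by split; apply: connect0.
  by split; apply: connect1; rewrite /star ?kw 1?eq_sym ?kw eqxx ?orbT.
move=> k l; apply: connect_trans (proj1 (hw k)) (proj2 (hw l)).
Qed.

Local Open Scope ring_scope.

Theorem main_gen (T : finType) (R : realType) (lam : R) (e : rel T) (i0 : T) :
  0 < lam < 1 -> simple_graph e -> connected_graph e ->
  (forall e' : rel T, simple_graph e' -> connected_graph e' ->
     Mc lam e' <= Mc lam e) ->
  is_tree e.
Proof.
move=> hlam [esym eirr] econ hmax; split => //; case=> c /andP[c2 /andP[cyc uc]].
have [w _ Hw] := eq_bigmax i0 xpredT (exp_centr lam e) isT (fun i _ => centr_ge0 hlam e i).
have [p [q [pw qw pq epq]]] : exists p q, [/\ p != w, q != w, p != q & e p q].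
  move: c2 cyc uc; case: c => [|a [|b [|c' r]]] //= _.
  rewrite rcons_path /= => /and4P[eab ebc _ elast] /and4P[ha hb _ _].
  have ab : a != b by apply: contraNneq ha => ->; rewrite inE eqxx.
  have ac : a != c' by apply: contraNneq ha => ->; rewrite !inE eqxx orbT.
  have bc : b != c' by apply: contraNneq hb => ->; rewrite inE eqxx.
  have la : last c' r != a by apply: contraNneq ha => <-; rewrite inE mem_last orbT.
  have lb : last c' r != b by apply: contraNneq hb => <-; rewrite mem_last.
  case: (eqVneq a w) => [aw|aw].
    by exists b, c'; split => //; rewrite -aw // eq_sym.
  case: (eqVneq b w) => [bw|bw].
    by exists (last c' r), a; split => //; rewrite -bw.
  by exists a, b.
have [x [y [xw yw xy exy rxy]]] : exists x y,
    [/\ x != w, y != w, x != y, e x y & (enum_rank x < enum_rank y)%N].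
  case: (ltngtP (enum_rank p) (enum_rank q)) => h.
  - by exists p, q.
  - by exists q, p; split => //; rewrite 1?eq_sym // esym.
  - by move: pq; rewrite (enum_rank_inj (val_inj h)) eqxx.
have lt1 : exp_centr lam e w < \sum_k \sum_(l | (enum_rank k < enum_rank l)%N) Bf lam w k l.
  rewrite centr_eq; apply: (sum_lt2 (p:=x) (q:=y)) => //.
    move=> k l rkl; apply: inner_le => //.
    by apply/eqP => E; subst; rewrite ltnn in rkl.
  by apply: inner_lt.
have ge2 : \sum_k \sum_(l | (enum_rank k < enum_rank l)%N) Bf lam w k l <= exp_centr lam (star w) w.
  rewrite centr_eq; apply: ler_sum => k _; apply: ler_sum => l rkl.
  apply: inner_star => //.
  by apply/eqP => E; subst; rewrite ltnn in rkl.
have le3 : exp_centr lam (star w) w <= Mc lam (star w) by apply: le_bigmax.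
have := hmax _ (star_simple w) (star_conn w).
rewrite /Mc in le3 * ; rewrite Hw => le4.
have := lt_le_trans lt1 (le_trans ge2 (le_trans le3 le4)).
by rewrite ltxx.
Qed.

Theorem lemma2 (R : realType) (lam : R) (n : nat) (e : rel 'I_n) :
  0 < lam < 1 -> (0 < n)%N ->
  simple_graph e -> connected_graph e ->
  (forall e' : rel 'I_n, simple_graph e' -> connected_graph e' ->
     Mc lam e' <= Mc lam e) ->
  is_tree e.
Proof. by move=> hlam hn; apply: (main_gen (Ordinal hn) hlam). Qed.
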